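(* Let $\gamma: I \to M$ be a unit speed curve on a smooth oriented surface $M \subset E^3$ with Darboux frame $\{T, V, U\}$, normal curvature $k_n$, geodesic curvature $k_g$ (nowhere zero) and geodesic torsion $\tau_g$, and suppose the position vector of $\gamma$ always lies in the plane spanned by $\{T, U\}$, i.e. $\gamma(s) = \lambda_1(s) T(s) + \lambda_2(s) U(s)$ for some differentiable functions $\lambda_1, \lambda_2$. Then $\gamma$ is a relatively normal-slant helix if and only if the function $$s \mapsto \frac{k_g^2}{(k_g^2 + \tau_g^2)^{3/2}}\, e^{\int \frac{\tau_g k_n}{k_g}\, ds}$$ is constant.
   Context: For a unit speed curve $\gamma$ on an oriented surface $M\subset E^3$, the Darboux frame is $T=\gamma'$, $U$ = unit normal of $M$ along $\gamma$, $V = U\times T$, satisfying $T' = k_g V + k_n U$, $V' = -k_g T + \tau_g U$, $U' = -k_n T - \tau_g V$; here $k_g$, $k_n$, $\tau_g$ are the geodesic curvature, normal curvature and geodesic torsion. The curve $\gamma$ is a relatively normal-slant helix if there is a fixed unit vector $d$ and a constant angle $\phi$ with $\langle V, d\rangle = \cos\phi$ along $\gamma$. The ''position vector'' is $\gamma(s)$ regarded as a vector from the origin. $\int \cdot\, ds$ denotes an antiderivative. *)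

(* Defs.v *)
From Stdlib Require Import Reals.
From Coquelicot Require Import Coquelicot.
Open Scope R_scope.

Definition vec3 : Type := (R * R * R)%type.
Definition vx (v : vec3) : R := fst (fst v).
Definition vy (v : vec3) : R := snd (fst v).
Definition vz (v : vec3) : R := snd v.
Definition mkv (a b c : R) : vec3 := (a, b, c).

Definition vadd (u v : vec3) : vec3 := mkv (vx u + vx v) (vy u + vy v) (vz u + vz v).
Definition vscal (k : R) (v : vec3) : vec3 := mkv (k * vx v) (k * vy v) (k * vz v).
Definition dot (u v : vec3) : R := vx u * vx v + vy u * vy v + vz u * vz v.
Definition cross (u v : vec3) : vec3 :=
  mkv (vy u * vz v - vz u * vy v)
      (vz u * vx v - vx u * vz v)
      (vx u * vy v - vy u * vx v).

Definition vderive (f : R -> vec3) (s : R) (v : vec3) : Prop :=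
  is_derive (fun t => vx (f t)) s (vx v) /\
  is_derive (fun t => vy (f t)) s (vy v) /\
  is_derive (fun t => vz (f t)) s (vz v).

Definition inI (a b : Rbar) (s : R) : Prop := Rbar_lt a s /\ Rbar_lt s b.

Definition smooth_on (a b : Rbar) (f : R -> R) : Prop :=
  forall n s, inI a b s -> ex_derive_n f n s.
Definition vsmooth_on (a b : Rbar) (f : R -> vec3) : Prop :=
  smooth_on a b (fun t => vx (f t)) /\ smooth_on a b (fun t => vy (f t)) /\
  smooth_on a b (fun t => vz (f t)).

(* Darboux frame {T, V, U} of a unit speed curve gamma on an oriented surface
   with unit normal U along gamma, together with kg, kn, taug:
   T = gamma', V = U x T, T' = kg V + kn U, V' = -kg T + taug U,
   U' = -kn T - taug V. *)
Definition darboux_frame (a b : Rbar) (gamma T V U : R -> vec3)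
  (kg kn taug : R -> R) : Prop :=
  vsmooth_on a b gamma /\ vsmooth_on a b U /\
  forall s, inI a b s ->
    vderive gamma s (T s) /\
    dot (T s) (T s) = 1 /\ dot (U s) (U s) = 1 /\ dot (T s) (U s) = 0 /\
    V s = cross (U s) (T s) /\
    vderive T s (vadd (vscal (kg s) (V s)) (vscal (kn s) (U s))) /\
    vderive V s (vadd (vscal (- kg s) (T s)) (vscal (taug s) (U s))) /\
    vderive U s (vadd (vscal (- kn s) (T s)) (vscal (- taug s) (V s))).

Definition rel_normal_slant_helix (a b : Rbar) (V : R -> vec3) : Prop :=
  exists (d : vec3) (phi : R), dot d d = 1 /\
    forall s, inI a b s -> dot (V s) d = cos phi.

(* Main.v *)
From Stdlib Require Import Reals Lra Lia Psatz Ranalysis5.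
From Coquelicot Require Import Coquelicot.
Require Import Defs.
Open Scope R_scope.

Lemma dmul (f g : R -> R) x df dg : is_derive f x df -> is_derive g x dg ->
  is_derive (fun t => f t * g t) x (df * g x + f x * dg).
Proof. intros H1 H2. apply (is_derive_mult f g x df dg H1 H2). intros; apply Rmult_comm. Qed.
Lemma dplus (f g : R -> R) x df dg : is_derive f x df -> is_derive g x dg ->
  is_derive (fun t => f t + g t) x (df + dg).
Proof. intros H1 H2. apply (is_derive_plus f g x df dg H1 H2). Qed.
Lemma dminus (f g : R -> R) x df dg : is_derive f x df -> is_derive g x dg ->
  is_derive (fun t => f t - g t) x (df - dg).
Proof. intros H1 H2. apply (is_derive_minus f g x df dg H1 H2). Qed.
Lemma dconst (c : R) x : is_derive (fun _ => c) x 0.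
Proof. apply (is_derive_const (K:=R_AbsRing) (V:=R_NormedModule)). Qed.
Lemma dinv (f : R -> R) x df : is_derive f x df -> f x <> 0 ->
  is_derive (fun t => / f t) x (- df / (f x)^2).
Proof. intros H1 H2. pose proof (is_derive_inv f x df H1 H2) as H.
  eapply is_derive_ext; [|exact H]. intros; reflexivity. Qed.
Lemma dsqrt (f : R -> R) x df : is_derive f x df -> 0 < f x ->
  is_derive (fun t => sqrt (f t)) x (df / (2 * sqrt (f x))).
Proof. apply is_derive_sqrt. Qed.
Lemma dexp (f : R -> R) x df : is_derive f x df ->
  is_derive (fun t => exp (f t)) x (df * exp (f x)).
Proof. intros H. pose proof (is_derive_comp exp f x (exp (f x)) df (is_derive_exp _) H) as K.
  exact K. Qed.
Lemma deq (f : R -> R) x l m : is_derive f x l -> l = m -> is_derive f x m.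
Proof. intros H ->; exact H. Qed.
Lemma dext (f g : R -> R) x l : (forall t, f t = g t) -> is_derive f x l -> is_derive g x l.
Proof. intros H; apply is_derive_ext; exact H. Qed.

Lemma locI a b s : inI a b s -> locally s (fun t => inI a b t).
Proof. intros [H1 H2]. apply (locally_interval _ s a b H1 H2). intros y h1 h2; split; auto. Qed.

Lemma betw a b x y t : inI a b x -> inI a b y -> x <= t <= y -> inI a b t.
Proof. intros [h1 h2] [h3 h4] [h5 h6]. split.
  - destruct a as [a| |]; simpl in *; auto; lra.
  - destruct b as [b| |]; simpl in *; auto; lra. Qed.

Lemma exI a b : Rbar_lt a b -> exists s, inI a b s.
Proof. intros H. unfold inI. destruct a as [a| |], b as [b| |]; simpl in *; try contradiction.
  - exists ((a+b)/2); simpl; lra.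
  - exists (a+1); simpl; lra.
  - exists (b-1); simpl; lra.
  - exists 0; simpl; auto. Qed.

Lemma der_cont (f : R -> R) x l : is_derive f x l -> continuity_pt f x.
Proof. intros H. apply continuity_pt_filterlim. apply (ex_derive_continuous f x). exists l; exact H. Qed.

Lemma constI a b (f : R -> R) x y : (forall s, inI a b s -> is_derive f s 0) ->
  inI a b x -> inI a b y -> f x = f y.
Proof. intros H Hx Hy.
  destruct (MVT_gen f x y (fun _ => 0)) as [c [Hc E]].
  - intros t Ht. apply H. apply (betw a b (Rmin x y) (Rmax x y)).
    + unfold Rmin; destruct (Rle_dec x y); auto.
    + unfold Rmax; destruct (Rle_dec x y); auto.
    + lra.
  - intros t Ht. apply (der_cont f t 0). apply H. apply (betw a b (Rmin x y) (Rmax x y)).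
    + unfold Rmin; destruct (Rle_dec x y); auto.
    + unfold Rmax; destruct (Rle_dec x y); auto.
    + lra.
  - lra. Qed.

Lemma signI a b (f : R -> R) x y : (forall s, inI a b s -> continuity_pt f s) ->
  (forall s, inI a b s -> f s <> 0) -> inI a b x -> inI a b y -> 0 < f x -> 0 < f y.
Proof. intros Hc Hn Hx Hy Hp.
  destruct (Rlt_or_le 0 (f y)) as [h|h]; auto.
  assert (h' : f y < 0) by (destruct (Rle_lt_or_eq_dec _ _ h); auto; exfalso; apply (Hn y Hy); auto).
  exfalso.
  destruct (Rtotal_order x y) as [Hl|[He|Hl]].
  - destruct (IVT_interv (fun t => - f t) x y) as [z [Hz Ez]].
    + intros t Ht. apply continuity_pt_opp. apply Hc. apply (betw a b x y); auto.
    + exact Hl.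
    + lra.
    + lra.
    + apply (Hn z). apply (betw a b x y); auto. lra.
  - subst; lra.
  - destruct (IVT_interv f y x) as [z [Hz Ez]].
    + intros t Ht. apply Hc. apply (betw a b y x); auto.
    + exact Hl.
    + lra.
    + lra.
    + apply (Hn z). apply (betw a b y x); auto. lra. Qed.

Lemma gram (d T U : vec3) : let V := cross U T in
  (dot d V)^2 = dot d d * (dot T T * dot U U - (dot T U)^2)
     - dot d T * (dot d T * dot U U - dot T U * dot d U)
     + dot d U * (dot d T * dot T U - dot T T * dot d U).
Proof. destruct d as [[d1 d2] d3], T as [[t1 t2] t3], U as [[u1 u2] u3].
  unfold dot, cross, vx, vy, vz, mkv; simpl. ring. Qed.

Lemma frameV (T U : vec3) : dot T T = 1 -> dot U U = 1 -> dot T U = 0 ->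
  dot T (cross U T) = 0 /\ dot U (cross U T) = 0 /\ dot (cross U T) (cross U T) = 1.
Proof. intros h1 h2 h3.
  assert (E : dot (cross U T) (cross U T) = dot U U * dot T T - (dot T U)^2).
  { destruct T as [[t1 t2] t3], U as [[u1 u2] u3]. unfold dot, cross, vx, vy, vz, mkv; simpl. ring. }
  rewrite E, h1, h2, h3. split; [|split]; try ring;
  destruct T as [[t1 t2] t3], U as [[u1 u2] u3]; unfold dot, cross, vx, vy, vz, mkv; simpl; ring. Qed.

Lemma parseval (d T U : vec3) : dot T T = 1 -> dot U U = 1 -> dot T U = 0 ->
  (dot d (cross U T))^2 + (dot d T)^2 + (dot d U)^2 = dot d d.
Proof. intros h1 h2 h3. rewrite (gram d T U). simpl. rewrite h1, h2, h3. ring. Qed.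

Lemma coef (T U : vec3) a b c : dot T T = 1 -> dot U U = 1 -> dot T U = 0 ->
  a * vx T + b * vx (cross U T) + c * vx U = 0 ->
  a * vy T + b * vy (cross U T) + c * vy U = 0 ->
  a * vz T + b * vz (cross U T) + c * vz U = 0 -> a = 0 /\ b = 0 /\ c = 0.
Proof. intros h1 h2 h3 ex ey ez. destruct (frameV T U h1 h2 h3) as [k1 [k2 k3]].
  set (V := cross U T) in *.
  assert (A : a * dot T T + b * dot T V + c * dot T U = vx T * (a * vx T + b * vx V + c * vx U) + vy T * (a * vy T + b * vy V + c * vy U) + vz T * (a * vz T + b * vz V + c * vz U)) by (unfold dot; ring).
  assert (B : a * dot T V + b * dot V V + c * dot U V = vx V * (a * vx T + b * vx V + c * vx U) + vy V * (a * vy T + b * vy V + c * vy U) + vz V * (a * vz T + b * vz V + c * vz U)) by (unfold dot; ring).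
  assert (C : a * dot T U + b * dot U V + c * dot U U = vx U * (a * vx T + b * vx V + c * vx U) + vy U * (a * vy T + b * vy V + c * vy U) + vz U * (a * vz T + b * vz V + c * vz U)) by (unfold dot; ring).
  rewrite ex, ey, ez in A, B, C. rewrite h1, h2, h3, k1, k2, k3 in *. split; [|split]; lra. Qed.

Lemma comp_eq (g t1 u1 l1 l2 : R -> R) s G TP UP :
  locally s (fun t => g t = l1 t * t1 t + l2 t * u1 t) -> is_derive g s G ->
  ex_derive l1 s -> ex_derive l2 s -> is_derive t1 s TP -> is_derive u1 s UP ->
  G = Derive l1 s * t1 s + l1 s * TP + (Derive l2 s * u1 s + l2 s * UP).
Proof. intros Hl Hg [d1 H1] [d2 H2] HT HU.
  pose proof (dplus _ _ _ _ _ (dmul _ _ _ _ _ H1 HT) (dmul _ _ _ _ _ H2 HU)) as K.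
  apply is_derive_ext_loc with (g := g) in K.
  - rewrite (is_derive_unique _ _ _ H1), (is_derive_unique _ _ _ H2).
    rewrite <- (is_derive_unique _ _ _ Hg). rewrite (is_derive_unique _ _ _ K). reflexivity.
  - eapply filter_imp; [|exact Hl]. intros t ->; reflexivity. Qed.

Lemma dot_der (f : R -> vec3) s v d : vderive f s v ->
  is_derive (fun t => dot (f t) d) s (dot v d).
Proof. intros [h1 [h2 h3]]. unfold dot.
  eapply deq. apply dplus; [apply dplus|]; apply dmul; try eassumption; try apply dconst.
  simpl; ring. Qed.

Lemma cpt_ext_loc (f g : R -> R) s : locally s (fun t => g t = f t) ->
  continuity_pt g s -> continuity_pt f s.
Proof. intros H1 H2. apply continuity_pt_filterlim. apply continuity_pt_filterlim in H2.
  apply (continuous_ext_loc f g s); [|exact H2]. eapply filter_imp; [|exact H1]. intros; auto. Qed.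

Lemma kg_cont a b gamma T V U kg kn taug :
  darboux_frame a b gamma T V U kg kn taug -> forall s, inI a b s -> continuity_pt kg s.
Proof. intros [[Hg1 [Hg2 Hg3]] [_ Hf]] s Hs.
  assert (K : forall (g : R -> R) (proj : vec3 -> R),
    smooth_on a b g ->
    (forall t, inI a b t -> is_derive g t (proj (T t))) ->
    (forall t, inI a b t -> is_derive (fun y => proj (T y)) t
        (kg t * proj (V t) + kn t * proj (U t))) ->
    continuity_pt (fun t => kg t * proj (V t) + kn t * proj (U t)) s).
  { intros g proj Hsm H1 H2.
    apply cpt_ext_loc with (g := Derive_n g 2).
    - eapply filter_imp; [|apply (locI a b s Hs)]. intros t Ht. simpl.
      rewrite <- (is_derive_unique _ _ _ (H2 t Ht)). apply Derive_ext_loc.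
      eapply filter_imp; [|apply (locI a b t Ht)]. intros y Hy.
      apply (is_derive_unique _ _ _ (H1 y Hy)).
    - apply continuity_pt_filterlim. exact (ex_derive_continuous (Derive_n g 2) s (Hsm 3%nat s Hs)). }
  assert (Cx := K (fun t => vx (gamma t)) vx Hg1 (fun t Ht => proj1 (proj1 (Hf t Ht))) 
     (fun t Ht => proj1 (proj1 (proj2 (proj2 (proj2 (proj2 (proj2 (Hf t Ht))))))))).
  assert (Cy := K (fun t => vy (gamma t)) vy Hg2 (fun t Ht => proj1 (proj2 (proj1 (Hf t Ht))))
     (fun t Ht => proj1 (proj2 (proj1 (proj2 (proj2 (proj2 (proj2 (proj2 (Hf t Ht)))))))))).
  assert (Cz := K (fun t => vz (gamma t)) vz Hg3 (fun t Ht => proj2 (proj2 (proj1 (Hf t Ht))))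
     (fun t Ht => proj2 (proj2 (proj1 (proj2 (proj2 (proj2 (proj2 (proj2 (Hf t Ht)))))))))).
  destruct (Hf s Hs) as [_ [_ [_ [_ [_ [[Tx [Ty Tz]] [_ [Ux [Uy Uz]]]]]]]]].
  apply der_cont in Tx, Ty, Tz, Ux, Uy, Uz.
  apply cpt_ext_loc with (g := fun t =>
     (kg t * vx (V t) + kn t * vx (U t)) * (vy (U t) * vz (T t) - vz (U t) * vy (T t)) +
     (kg t * vy (V t) + kn t * vy (U t)) * (vz (U t) * vx (T t) - vx (U t) * vz (T t)) +
     (kg t * vz (V t) + kn t * vz (U t)) * (vx (U t) * vy (T t) - vy (U t) * vx (T t))).
  - eapply filter_imp; [|apply (locI a b s Hs)]. intros t Ht.
    destruct (Hf t Ht) as [_ [HTT [HUU [HTU [HV _]]]]].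
    destruct (frameV _ _ HTT HUU HTU) as [k1 [k2 k3]]. rewrite <- HV in k1, k2, k3.
    transitivity (kg t * dot (V t) (V t) + kn t * dot (U t) (V t)).
    + rewrite HV. unfold dot, cross, vx, vy, vz, mkv; simpl. ring.
    + rewrite k2, k3. ring.
  - apply continuity_pt_plus; [apply continuity_pt_plus|]; apply continuity_pt_mult;
      (try exact Cx); (try exact Cy); (try exact Cz);
      apply continuity_pt_minus; apply continuity_pt_mult; assumption. Qed.

Lemma Rpow32 w : 0 < w -> Rpower (w ^ 2) (3 / 2) = w ^ 3.
Proof. intros Hw. rewrite <- (Rpower_pow 2 w Hw). rewrite Rpower_mult.
  replace (INR 2 * (3/2)) with (INR 3) by (simpl; field). apply Rpower_pow; auto. Qed.

Lemma claimed_eq kg tau l1 l2 E K r : kg <> 0 -> l2 <> 0 -> 0 < r -> r^2 = l1^2 + l2^2 ->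
  tau * l2 = l1 * kg -> 0 < E -> l2 * E = K ->
  kg^2 / Rpower (kg^2 + tau^2) (3/2) * E = Rabs K * Rabs (l2^2 / (kg * r^3)).
Proof. intros h1 h2 h3 h4 h5 h6 h7.
  assert (Et : tau = l1 * kg / l2) by (field_simplify_eq; [lra|auto]).
  assert (Pk := Rabs_pos_lt _ h1). assert (Pl := Rabs_pos_lt _ h2).
  assert (Ew : kg^2 + tau^2 = (Rabs kg * r / Rabs l2)^2).
  { rewrite Et. unfold Rdiv. rewrite !Rpow_mult_distr, !pow_inv, !pow2_abs. field_simplify_eq; auto. rewrite h4. ring. }
  assert (Pw : 0 < Rabs kg * r / Rabs l2).
  { apply Rdiv_lt_0_compat; [apply Rmult_lt_0_compat|]; auto. }
  rewrite Ew, (Rpow32 _ Pw). subst K.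
  rewrite Rabs_mult, (Rabs_pos_eq E) by lra.
  assert (hr : r^3 > 0) by (apply pow_lt; auto).
  unfold Rdiv at 3. rewrite Rabs_mult, Rabs_inv, Rabs_mult, (Rabs_pos_eq (r^3)) by lra.
  rewrite <- RPow_abs.
  replace (kg^2) with (Rabs kg ^2) by (apply pow2_abs).
  field. lra.
Qed.

Lemma dot_comm u v : dot u v = dot v u.
Proof. unfold dot; ring. Qed.
Lemma dot_lin k m v w d : dot (vadd (vscal k v) (vscal m w)) d = k * dot v d + m * dot w d.
Proof. unfold dot, vadd, vscal, vx, vy, vz, mkv; simpl; ring. Qed.
Lemma vec_eq u v : vx u = vx v -> vy u = vy v -> vz u = vz v -> u = v.
Proof. destruct u as [[u1 u2] u3], v as [[v1 v2] v3]; unfold vx, vy, vz; simpl; intros -> -> ->; reflexivity. Qed.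
Lemma vx_lin k m v w : vx (vadd (vscal k v) (vscal m w)) = k * vx v + m * vx w.
Proof. reflexivity. Qed.
Lemma vy_lin k m v w : vy (vadd (vscal k v) (vscal m w)) = k * vy v + m * vy w.
Proof. reflexivity. Qed.
Lemma vz_lin k m v w : vz (vadd (vscal k v) (vscal m w)) = k * vz v + m * vz w.
Proof. reflexivity. Qed.
Ltac toR := match goal with |- ?x = ?y => change (@eq R x y) end.

Theorem theorem3p2 (a b : Rbar) (gamma T V U : R -> vec3) (kg kn taug : R -> R) :
  Rbar_lt a b ->
  darboux_frame a b gamma T V U kg kn taug ->
  (forall s, inI a b s -> kg s <> 0) ->
  (exists lam1 lam2 : R -> R,
      (forall s, inI a b s -> ex_derive lam1 s /\ ex_derive lam2 s) /\
      (forall s, inI a b s ->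
         gamma s = vadd (vscal (lam1 s) (T s)) (vscal (lam2 s) (U s)))) ->
  forall F : R -> R,
    (forall s, inI a b s -> is_derive F s (taug s * kn s / kg s)) ->
    (rel_normal_slant_helix a b V <->
     exists c : R, forall s, inI a b s ->
       (kg s) ^ 2 / Rpower ((kg s) ^ 2 + (taug s) ^ 2) (3 / 2) * exp (F s) = c).
Proof.
intros Hab Hfr Hkg [l1 [l2 [Hl Hg]]] F HF.
pose proof (kg_cont _ _ _ _ _ _ _ _ _ Hfr) as Hkc.
destruct Hfr as [_ [_ Hf]].
assert (EQ : forall s, inI a b s -> 1 = Derive l1 s - l2 s * kn s /\
   l1 s * kg s - l2 s * taug s = 0 /\ l1 s * kn s + Derive l2 s = 0).
{ intros s Hs. destruct (Hf s Hs) as [[Gx [Gy Gz]] [HTT [HUU [HTU [HV [[Tx [Ty Tz]] [_ [Ux [Uy Uz]]]]]]]]].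
  destruct (Hl s Hs) as [D1 D2].
  assert (loc : forall proj : vec3 -> R,
     (forall v w k m, proj (vadd (vscal k v) (vscal m w)) = k * proj v + m * proj w) ->
     locally s (fun t => proj (gamma t) = l1 t * proj (T t) + l2 t * proj (U t))).
  { intros proj Hp. eapply filter_imp; [|apply (locI a b s Hs)]. intros t Ht. rewrite (Hg t Ht). apply Hp. }
  pose proof (comp_eq _ _ _ _ _ s _ _ _ (loc vx (fun _ _ _ _ => eq_refl)) Gx D1 D2 Tx Ux) as ex.
  pose proof (comp_eq _ _ _ _ _ s _ _ _ (loc vy (fun _ _ _ _ => eq_refl)) Gy D1 D2 Ty Uy) as ey.
  pose proof (comp_eq _ _ _ _ _ s _ _ _ (loc vz (fun _ _ _ _ => eq_refl)) Gz D1 D2 Tz Uz) as ez.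
  cbn [vx vy vz vadd vscal mkv fst snd] in ex, ey, ez.
  destruct (coef (T s) (U s) (Derive l1 s - l2 s * kn s - 1) (l1 s * kg s - l2 s * taug s)
     (l1 s * kn s + Derive l2 s) HTT HUU HTU) as [c1 [c2 c3]].
  { rewrite <- HV. cbn [vx vy vz vadd vscal mkv fst snd]. lra. }
  { rewrite <- HV. cbn [vx vy vz vadd vscal mkv fst snd]. lra. }
  { rewrite <- HV. cbn [vx vy vz vadd vscal mkv fst snd]. lra. }
  split; [|split]; lra. }
assert (DP : forall s, inI a b s -> is_derive (fun t => l2 t * exp (F t)) s 0).
{ intros s Hs. destruct (Hl s Hs) as [_ [d2 H2]]. destruct (EQ s Hs) as [_ [e2 e3]].
  pose proof (Hkg s Hs) as hk.
  eapply deq. apply dmul; [exact H2| apply dexp, HF, Hs].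
  rewrite <- (is_derive_unique _ _ _ H2). cbv beta.
  replace (Derive l2 s) with (- (l1 s * kn s)) by lra.
  transitivity ((l2 s * taug s - l1 s * kg s) * kn s / kg s * exp (F s)).
  toR; field; auto. replace (l2 s * taug s - l1 s * kg s) with 0 by lra. toR; field; auto. }
destruct (exI a b Hab) as [s0 Hs0].
set (K := l2 s0 * exp (F s0)).
assert (PK : forall s, inI a b s -> l2 s * exp (F s) = K).
{ intros s Hs. apply (constI a b (fun t => l2 t * exp (F t)) s s0 DP Hs Hs0). }
assert (L2 : forall s, inI a b s -> l2 s <> 0).
{ intros s Hs E0. pose proof (PK s Hs) as h. rewrite E0, Rmult_0_l in h.
  assert (Z2 : forall t, inI a b t -> l2 t = 0).
  { intros t Ht. pose proof (PK t Ht) as h'. rewrite <- h in h'.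
    pose proof (exp_pos (F t)). destruct (Rmult_integral _ _ h'); auto; lra. }
  assert (Z1 : forall t, inI a b t -> l1 t = 0).
  { intros t Ht. destruct (EQ t Ht) as [_ [e2 _]]. rewrite (Z2 t Ht) in e2.
    pose proof (Hkg t Ht). destruct (Rmult_integral (l1 t) (kg t)); auto; lra. }
  assert (D0 : Derive l1 s = 0).
  { rewrite (Derive_ext_loc l1 (fun _ => 0)). apply Derive_const.
    eapply filter_imp; [|apply (locI a b s Hs)]. intros t Ht. apply Z1; auto. }
  destruct (EQ s Hs) as [e1 _]. rewrite D0, E0 in e1. lra. }
assert (K0 : K <> 0).
{ unfold K. pose proof (exp_pos (F s0)). pose proof (L2 s0 Hs0). apply Rmult_integral_contrapositive; split; lra. }
set (r := fun t => sqrt (l1 t * l1 t + l2 t * l2 t)).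
assert (Rp : forall s, inI a b s -> 0 < r s).
{ intros s Hs. unfold r. apply sqrt_lt_R0. pose proof (L2 s Hs). nra. }
assert (R2 : forall s, inI a b s -> r s ^ 2 = l1 s ^ 2 + l2 s ^ 2).
{ intros s Hs. unfold r. rewrite pow2_sqrt. ring. pose proof (L2 s Hs). nra. }
assert (DR : forall s, inI a b s -> is_derive r s (l1 s / r s)).
{ intros s Hs. destruct (Hl s Hs) as [[d1 H1] [d2 H2]]. destruct (EQ s Hs) as [e1 [_ e3]].
  pose proof (Rp s Hs). eapply deq. apply dsqrt.
  apply dplus; apply dmul; eassumption. pose proof (L2 s Hs); nra.
  rewrite <- (is_derive_unique _ _ _ H1), <- (is_derive_unique _ _ _ H2). fold (r s).
  replace (Derive l1 s) with (1 + l2 s * kn s) by lra.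
  replace (Derive l2 s) with (- (l1 s * kn s)) by lra. toR; field. lra. }
set (G := fun t => l2 t ^ 2 / (kg t * r t ^ 3)).
assert (CE : forall s, inI a b s ->
  (kg s) ^ 2 / Rpower ((kg s) ^ 2 + (taug s) ^ 2) (3 / 2) * exp (F s) = Rabs K * Rabs (G s)).
{ intros s Hs. destruct (EQ s Hs) as [_ [e2 _]]. apply (claimed_eq _ _ (l1 s)).
  apply Hkg; auto. apply L2; auto. apply Rp; auto. apply R2; auto. lra. apply exp_pos. apply PK; auto. }
assert (HEL : rel_normal_slant_helix a b V <-> exists g, forall s, inI a b s -> G s = g).
{ split.
  - intros [d [phi [Hdd Hd]]]. set (c := cos phi) in *.
    set (x := fun t => dot (T t) d). set (z := fun t => dot (U t) d). set (h := fun t => dot (gamma t) d).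
    assert (DER : forall s, inI a b s ->
       is_derive h s (x s) /\ is_derive x s (kg s * c + kn s * z s) /\
       taug s * z s - kg s * x s = 0).
    { intros s Hs. destruct (Hf s Hs) as [Hgd [_ [_ [_ [_ [HTd [HVd HUd]]]]]]].
      split; [|split].
      - exact (dot_der _ _ _ d Hgd).
      - eapply deq. exact (dot_der _ _ _ d HTd). rewrite dot_lin, (Hd s Hs). reflexivity.
      - pose proof (dot_der _ _ _ d HVd) as K1. rewrite dot_lin in K1.
        assert (K2 : is_derive (fun t => dot (V t) d) s 0).
        { apply is_derive_ext_loc with (f := fun _ => c).
          eapply filter_imp; [|apply (locI a b s Hs)]. intros t Ht. symmetry; apply Hd; auto.
          apply dconst. }
        pose proof (is_derive_unique _ _ _ K1) as u1. pose proof (is_derive_unique _ _ _ K2) as u2.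
        rewrite u1 in u2. unfold x, z. lra. }
    assert (PAR : forall s, inI a b s -> l2 s * x s = l1 s * z s).
    { intros s Hs. destruct (DER s Hs) as [_ [_ e]]. destruct (EQ s Hs) as [_ [e2 _]].
      apply (Rmult_eq_reg_l (kg s)); [|apply Hkg; auto].
      transitivity (l2 s * (kg s * x s)); [ring|]. replace (kg s * x s) with (taug s * z s) by lra.
      transitivity ((l2 s * taug s) * z s); [ring|]. replace (l2 s * taug s) with (l1 s * kg s) by lra. ring. }
    assert (HL : forall s, inI a b s -> h s = l1 s * x s + l2 s * z s).
    { intros s Hs. unfold h. rewrite (Hg s Hs), dot_lin. reflexivity. }
    assert (DQ : forall s, inI a b s -> is_derive (fun t => h t * / r t) s 0).
    { intros s Hs. pose proof (Rp s Hs). eapply deq. apply dmul; [apply DER; auto | apply dinv; [apply DR; auto| lra]].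
      cbv beta. rewrite (HL s Hs).
      transitivity ((x s * r s ^ 2 - (l1 s * x s + l2 s * z s) * l1 s) / r s ^ 3). toR; field; lra.
      rewrite (R2 s Hs).
      replace (x s * (l1 s ^ 2 + l2 s ^ 2) - (l1 s * x s + l2 s * z s) * l1 s)
        with (l2 s * (l2 s * x s - l1 s * z s)) by ring.
      rewrite (PAR s Hs). toR; field. lra. }
    set (Q := h s0 * / r s0).
    assert (HQ : forall s, inI a b s -> h s * / r s = Q).
    { intros s Hs. apply (constI a b (fun t => h t * / r t) s s0 DQ Hs Hs0). }
    assert (XS : forall s, inI a b s -> x s = l1 s * Q / r s).
    { intros s Hs. pose proof (Rp s Hs) as rp. pose proof (HQ s Hs) as q. rewrite (HL s Hs) in q.
      rewrite <- q. pose proof (PAR s Hs) as pa. pose proof (R2 s Hs) as r2.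
      apply (Rmult_eq_reg_l (r s ^ 2)); [|apply pow_nonzero; lra].
      transitivity (l1 s ^2 * x s + l2 s * (l2 s * x s)). { rewrite r2; ring. }
      rewrite pa. toR; field; lra. }
    assert (ZS : forall s, inI a b s -> z s = l2 s * Q / r s).
    { intros s Hs. pose proof (Rp s Hs) as rp. pose proof (HQ s Hs) as q. rewrite (HL s Hs) in q.
      rewrite <- q. pose proof (PAR s Hs) as pa. pose proof (R2 s Hs) as r2.
      apply (Rmult_eq_reg_l (r s ^ 2)); [|apply pow_nonzero; lra].
      transitivity (l1 s * (l1 s * z s) + l2 s ^ 2 * z s). { rewrite r2; ring. }
      rewrite <- pa. toR; field; lra. }
    assert (KEY : forall s, inI a b s -> Q * l2 s ^ 2 / r s ^ 3 = kg s * c).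
    { intros s Hs. pose proof (Rp s Hs). destruct (Hl s Hs) as [[d1 H1] _].
      destruct (EQ s Hs) as [e1 _].
      assert (DX : is_derive x s (d1 * Q * / r s + l1 s * Q * (- (l1 s / r s) / r s ^ 2))).
      { apply is_derive_ext_loc with (f := fun t => l1 t * Q * / r t).
        eapply filter_imp; [|apply (locI a b s Hs)]. intros t Ht. rewrite (XS t Ht). reflexivity.
        eapply deq. apply dmul; [apply dmul; [exact H1| apply dconst] | apply dinv; [apply DR; auto| lra]].
        cbv beta. toR; ring. }
      destruct (DER s Hs) as [_ [DX' _]].
      pose proof (is_derive_unique _ _ _ DX) as u1. pose proof (is_derive_unique _ _ _ DX') as u2.
      rewrite u1 in u2. rewrite (ZS s Hs) in u2. rewrite <- (is_derive_unique _ _ _ H1) in u2.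
      replace (Derive l1 s) with (1 + l2 s * kn s) in u2 by lra.
      pose proof (R2 s Hs) as r2.
      replace (kg s * c) with ((1 + l2 s * kn s) * Q * / r s + l1 s * Q * (- (l1 s / r s) / r s ^ 2) - kn s * (l2 s * Q / r s)) by lra.
      transitivity (Q * (r s ^ 2 - l1 s ^ 2) / r s ^ 3); [rewrite r2; toR; field; lra|].
      toR; field. lra. }
    assert (PQ : Q ^ 2 + c ^ 2 = 1).
    { destruct (Hf s0 Hs0) as [_ [HTT [HUU [HTU [HV _]]]]].
      pose proof (parseval d (T s0) (U s0) HTT HUU HTU) as P.
      rewrite <- HV, Hdd, (dot_comm d (V s0)), (Hd s0 Hs0), (dot_comm d (T s0)), (dot_comm d (U s0)) in P.
      fold (x s0) (z s0) in P. rewrite (XS s0 Hs0), (ZS s0 Hs0) in P.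
      pose proof (Rp s0 Hs0). pose proof (R2 s0 Hs0).
      rewrite <- P. toR; field_simplify; [|lra]. rewrite H0. toR; field. nra. }
    assert (Q0 : Q <> 0).
    { intros q0. pose proof (KEY s0 Hs0) as k. rewrite q0 in k.
      assert (c = 0). { pose proof (Hkg s0 Hs0). destruct (Rmult_integral (kg s0) c); auto. lra. lra. }
      rewrite q0 in PQ. rewrite H in PQ. lra. }
    exists (c / Q). intros s Hs. unfold G. pose proof (KEY s Hs). pose proof (Rp s Hs). pose proof (Hkg s Hs).
    apply (Rmult_eq_reg_l (kg s * Q)). transitivity (Q * l2 s ^ 2 / r s ^ 3). toR; field; lra. rewrite H. toR; field; auto.
    apply Rmult_integral_contrapositive; split; auto.
  - intros [g Hgg].
    assert (SQ : 0 < sqrt (1 + g ^ 2)) by (apply sqrt_lt_R0; nra).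
    assert (SQ2 : sqrt (1 + g ^ 2) ^ 2 = 1 + g ^ 2) by (apply pow2_sqrt; nra).
    set (Q := / sqrt (1 + g ^ 2)). set (c := g * Q).
    assert (QC : Q ^ 2 + c ^ 2 = 1).
    { unfold c, Q. transitivity ((1 + g^2) / sqrt (1 + g ^ 2) ^ 2). toR; field; lra. rewrite SQ2. toR; field. nra. }
    set (Dv := fun t => vadd (vscal (Q / r t) (gamma t)) (vscal c (V t))).
    assert (CK : forall s, inI a b s -> c * kg s = Q * l2 s ^ 2 / r s ^ 3).
    { intros s Hs. unfold c. replace (g * Q * kg s) with (G s * Q * kg s) by (rewrite (Hgg s Hs); reflexivity).
      unfold G. pose proof (Rp s Hs). pose proof (Hkg s Hs).
      toR; field. split; lra. }
    assert (CT : forall s, inI a b s -> c * taug s = Q * l1 s * l2 s / r s ^ 3).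
    { intros s Hs. pose proof (CK s Hs) as ck. destruct (EQ s Hs) as [_ [e2 _]]. pose proof (L2 s Hs). pose proof (Rp s Hs).
      apply (Rmult_eq_reg_l (l2 s)); auto.
      transitivity (c * (l2 s * taug s)); [ring|]. replace (l2 s * taug s) with (l1 s * kg s) by lra.
      transitivity (l1 s * (c * kg s)); [ring|]. rewrite ck. toR; field; lra. }
    assert (DD : forall (proj : vec3 -> R),
      (forall v w k m, proj (vadd (vscal k v) (vscal m w)) = k * proj v + m * proj w) ->
      (forall s, inI a b s -> is_derive (fun t => proj (gamma t)) s (proj (T s))) ->
      (forall s, inI a b s -> is_derive (fun t => proj (V t)) s
             (proj (vadd (vscal (- kg s) (T s)) (vscal (taug s) (U s))))) ->
      forall s, inI a b s -> is_derive (fun t => proj (Dv t)) s 0).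
    { intros proj plin H1 H2 s Hs.
      apply is_derive_ext with (f := fun t => Q * / r t * proj (gamma t) + c * proj (V t)).
      { intros t. unfold Dv. rewrite plin. unfold Rdiv. reflexivity. }
      pose proof (Rp s Hs).
      eapply deq. apply dplus; [apply dmul; [apply dmul; [apply dconst | apply dinv; [apply DR; auto|lra]] | apply H1; auto] | apply dmul; [apply dconst | apply H2; auto]].
      cbv beta. rewrite !plin, (Hg s Hs), plin.
      transitivity ((Q * (r s ^ 2 - l1 s ^ 2 - l2 s ^ 2)) * proj (T s) / r s ^ 3
         + (Q * l2 s ^ 2 / r s ^ 3 - c * kg s) * proj (T s)
         + (c * taug s - Q * l1 s * l2 s / r s ^ 3) * proj (U s)).
      { toR; field. lra. }
      rewrite (R2 s Hs), (CK s Hs), (CT s Hs). toR; field. lra. }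
    assert (DX := DD vx (fun _ _ _ _ => eq_refl) (fun s Hs => proj1 (proj1 (Hf s Hs)))
        (fun s Hs => proj1 (proj1 (proj2 (proj2 (proj2 (proj2 (proj2 (proj2 (Hf s Hs)))))))))).
    assert (DY := DD vy (fun _ _ _ _ => eq_refl) (fun s Hs => proj1 (proj2 (proj1 (Hf s Hs))))
        (fun s Hs => proj1 (proj2 (proj1 (proj2 (proj2 (proj2 (proj2 (proj2 (proj2 (Hf s Hs))))))))))).
    assert (DZ := DD vz (fun _ _ _ _ => eq_refl) (fun s Hs => proj2 (proj2 (proj1 (Hf s Hs))))
        (fun s Hs => proj2 (proj2 (proj1 (proj2 (proj2 (proj2 (proj2 (proj2 (proj2 (Hf s Hs))))))))))).
    assert (HD : forall s, inI a b s -> Dv s = Dv s0).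
    { intros s Hs. apply vec_eq.
      apply (constI a b (fun t => vx (Dv t)) s s0 DX Hs Hs0).
      apply (constI a b (fun t => vy (Dv t)) s s0 DY Hs Hs0).
      apply (constI a b (fun t => vz (Dv t)) s s0 DZ Hs Hs0). }
    assert (DOT : forall s, inI a b s -> dot (gamma s) (V s) = 0 /\ dot (gamma s) (gamma s) = r s ^ 2 /\ dot (V s) (V s) = 1).
    { intros s Hs. destruct (Hf s Hs) as [_ [HTT [HUU [HTU [HV _]]]]].
      destruct (frameV _ _ HTT HUU HTU) as [k1 [k2 k3]]. rewrite <- HV in k1, k2, k3.
      rewrite (Hg s Hs), !dot_lin, (R2 s Hs), k1, k2, k3.
      rewrite (dot_comm (T s) (vadd _ _)), (dot_comm (U s) (vadd _ _)), !dot_lin.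
      rewrite HTT, HUU, HTU, (dot_comm (U s) (T s)), HTU. split; [ring|split; [ring|reflexivity]]. }
    exists (Dv s0), (acos c). split.
    + destruct (DOT s0 Hs0) as [o1 [o2 o3]]. pose proof (Rp s0 Hs0).
      unfold Dv at 1. rewrite dot_lin, (dot_comm (gamma s0)), (dot_comm (V s0)). unfold Dv. rewrite !dot_lin.
      rewrite (dot_comm (V s0) (gamma s0)), o1, o2, o3. transitivity (Q ^ 2 + c ^ 2); [toR; field; lra | exact QC].
    + intros s Hs. rewrite cos_acos.
      * rewrite <- (HD s Hs). destruct (DOT s Hs) as [o1 [o2 o3]].
        unfold Dv. rewrite (dot_comm (V s)), dot_lin, o1, o3. ring.
      * split; nra. }
rewrite HEL. split.
- intros [g Hgg]. exists (Rabs K * Rabs g). intros s Hs. rewrite CE, Hgg; auto.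
- intros [c Hc].
  assert (KA : Rabs K > 0) by (apply Rabs_pos_lt; auto).
  assert (AG : forall s, inI a b s -> Rabs (G s) = c / Rabs K).
  { intros s Hs. rewrite <- (Hc s Hs), CE by auto. field. lra. }
  assert (Gpos : forall s, inI a b s -> 0 < kg s -> 0 < G s).
  { intros s Hs hk. unfold G. pose proof (L2 s Hs). pose proof (Rp s Hs).
    apply Rdiv_lt_0_compat. apply pow2_gt_0; auto. apply Rmult_lt_0_compat; auto. apply pow_lt; auto. }
  assert (Gneg : forall s, inI a b s -> kg s < 0 -> G s < 0).
  { intros s Hs hk. unfold G. pose proof (L2 s Hs). pose proof (Rp s Hs).
    assert (0 < l2 s ^ 2) by (apply pow2_gt_0; auto). assert (0 < r s ^ 3) by (apply pow_lt; auto).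
    unfold Rdiv. apply Rmult_pos_neg; auto. apply Rinv_lt_0_compat. nra. }
  destruct (Rlt_or_le 0 (kg s0)) as [hk|hk].
  + exists (c / Rabs K). intros s Hs. rewrite <- (AG s Hs).
    rewrite Rabs_pos_eq; auto. apply Rlt_le, Gpos; auto.
    apply (signI a b kg s0 s Hkc Hkg Hs0 Hs hk).
  + exists (- (c / Rabs K)). intros s Hs. rewrite <- (AG s Hs).
    assert (hk' : 0 < - kg s0) by (pose proof (Hkg s0 Hs0); destruct hk; [lra| contradiction]).
    pose proof (signI a b (fun t => - kg t) s0 s (fun t Ht => continuity_pt_opp _ _ (Hkc t Ht))
       (fun t Ht h => Hkg t Ht ltac:(lra)) Hs0 Hs hk') as hks. simpl in hks.
    rewrite Rabs_left. ring. apply Gneg; auto. lra.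
Qed.
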